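(* Let $n,m,\ell\in\mathbb{N}_0$, let $U_{\mathrm{pos}}\subset\mathbb{R}^n$ be open, let $A:U_{\mathrm{pos}}\to\mathbb{R}^{\ell\times n}$ and $B:U_{\mathrm{pos}}\to\mathbb{R}^{n\times m}$ be continuous, and assume that $A$ has constant rank on $U_{\mathrm{pos}}$. For $\bm{r}\in U_{\mathrm{pos}}$ let $\mathcal{D}_{\bm{r}}\subset\mathbb{R}^{3n+m}\times\mathbb{R}^{3n+m}$ be the set of all pairs of a flow $f=(\bm{v}_{\mathcal{L},f},\bm{F}_{\mathcal{L},f},\bm{v}_{\mathcal{R}},\bm{v}_{\mathrm{ext}})\in\mathbb{R}^n\times\mathbb{R}^n\times\mathbb{R}^n\times\mathbb{R}^m$ and an effort $e=(\bm{F}_{\mathcal{L},e},\bm{v}_{\mathcal{L},e},\bm{F}_{\mathcal{R}},\bm{F}_{\mathrm{ext}})\in\mathbb{R}^n\times\mathbb{R}^n\times\mathbb{R}^n\times\mathbb{R}^m$ such that $\bm{v}_{\mathcal{L},f}=\bm{v}_{\mathcal{L},e}=\bm{v}_{\mathcal{R}}$, $A(\bm{r})\bm{v}_{\mathcal{L},e}=0$, $\bm{v}_{\mathrm{ext}}=B(\bm{r})^\top\bm{v}_{\mathcal{L},e}$, and there exists $\bm{\mu}\in\mathbb{R}^\ell$ with $\bm{F}_{\mathcal{L},f}+\bm{F}_{\mathcal{L},e}+\bm{F}_{\mathcal{R}}+B(\bm{r})\bm{F}_{\mathrm{ext}}+A(\bm{r})^\top\bm{\mu}=0$. Then the family $(\mathcal{D}_{\bm{r}})_{\bm{r}\in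 U_{\mathrm{pos}}}$ is a modulated Dirac structure.
   Context: A subspace $\mathcal{D}\subset\mathbb{R}^N\times\mathbb{R}^N$ is a Dirac structure if for all $f,e\in\mathbb{R}^N$: $(f,e)\in\mathcal{D}$ if and only if $\hat f^\top e+f^\top\hat e=0$ for all $(\hat f,\hat e)\in\mathcal{D}$. For $U\subset\mathbb{R}^k$ open, a family $(\mathcal{D}_x)_{x\in U}$ of subspaces of $\mathbb{R}^N\times\mathbb{R}^N$ is a modulated Dirac structure if for every $x\in U$: (a) $\mathcal{D}_x$ is a Dirac structure, and (b) there exist a neighborhood $U_x\subset U$ of $x$ and a family $(T_y)_{y\in U_x}$ of linear bijective maps $T_y:\mathbb{R}^N\to\mathcal{D}_y$ such that for every $z\in\mathbb{R}^N$ the map $y\mapsto T_yz$ from $U_x$ to $\mathbb{R}^N\times\mathbb{R}^N$ is continuous. *)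

(* Defs.v *)
From mathcomp Require Import all_boot all_algebra.
From mathcomp Require Import all_classical all_reals all_analysis.
Set Implicit Arguments. Unset Strict Implicit. Unset Printing Implicit Defensive.
Import GRing.Theory Num.Theory numFieldNormedType.Exports.
Local Open Scope ring_scope.
Local Open Scope classical_set_scope.

Definition is_subspace (R : realType) (N : nat)
    (D : set ('cV[R]_N * 'cV[R]_N)) : Prop :=
  D 0 /\ forall (a : R) p q, D p -> D q -> D (a *: p + q).

Definition Dirac_structure (R : realType) (N : nat)
    (D : set ('cV[R]_N * 'cV[R]_N)) : Prop :=
  is_subspace D /\
  forall f e : 'cV[R]_N,
    D (f, e) <->
    (forall fh eh : 'cV[R]_N, D (fh, eh) -> fh^T *m e + f^T *m eh = 0).

Definition lin_bij_onto (R : realType) (N : nat)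
    (T : 'cV[R]_N -> 'cV[R]_N * 'cV[R]_N)
    (D : set ('cV[R]_N * 'cV[R]_N)) : Prop :=
  (forall (a : R) u v, T (a *: u + v) = a *: T u + T v) /\
  injective T /\
  (forall p, D p <-> exists z, T z = p).

Definition modulated_Dirac (R : realType) (k N : nat) (U : set 'cV[R]_k)
    (D : 'cV[R]_k -> set ('cV[R]_N * 'cV[R]_N)) : Prop :=
  forall x, U x ->
    Dirac_structure (D x) /\
    exists (Ux : set 'cV[R]_k) (T : 'cV[R]_k -> 'cV[R]_N -> 'cV[R]_N * 'cV[R]_N),
      open Ux /\ Ux x /\ Ux `<=` U /\
      (forall y, Ux y -> lin_bij_onto (T y) (D y)) /\
      (forall z, {within Ux, continuous (fun y => T y z)}).

(* The family D_r from the statement; R^{3n+m} is represented as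
   'cV_(n + n + n + m), a flow/effort being the stacked column of its
   four components. *)
Definition Dmech (R : realType) (n m l : nat)
    (A : 'cV[R]_n -> 'M[R]_(l, n)) (B : 'cV[R]_n -> 'M[R]_(n, m))
    (r : 'cV[R]_n) : set ('cV[R]_(n + n + n + m) * 'cV[R]_(n + n + n + m)) :=
  fun fe =>
    exists (vLf FLf vR : 'cV[R]_n) (vext : 'cV[R]_m)
           (FLe vLe FR : 'cV[R]_n) (Fext : 'cV[R]_m),
      fe.1 = col_mx (col_mx (col_mx vLf FLf) vR) vext /\
      fe.2 = col_mx (col_mx (col_mx FLe vLe) FR) Fext /\
      vLf = vLe /\ vLe = vR /\
      A r *m vLe = 0 /\
      vext = (B r)^T *m vLe /\
      exists mu : 'cV[R]_l,
        FLf + FLe + FR + B r *m Fext + (A r)^T *m mu = 0.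

(* Main.v *)
Require Import Defs.
From mathcomp Require Import all_boot all_algebra.
From mathcomp Require Import all_classical all_reals all_analysis.
From mathcomp Require Import ring lra.
Set Implicit Arguments. Unset Strict Implicit. Unset Printing Implicit Defensive.
Import GRing.Theory Num.Theory numFieldNormedType.Exports.
Local Open Scope ring_scope.
Local Open Scope classical_set_scope.


Section Cts.
Context {R : realType} {X : topologicalType} (y : X).
Local Notation cts f := ({for y, continuous f}).

Lemma cts_ext {Y : topologicalType} (f g : X -> Y) :
  (forall x, f x = g x) -> cts g -> cts f.
Proof. by move=> fg; have -> : f = g by apply/funext. Qed.

Lemma cts_cst {Y : topologicalType} (c : Y) : cts (fun _ => c).
Proof. exact: cvg_cst. Qed.

Lemma cts_entry p q (f : X -> 'M[R]_(p, q)) i j :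
  cts f -> cts (fun x => f x i j).
Proof. by move=> cf; exact: (@continuous_comp _ _ _ f (fun M : 'M[R]_(p, q) => M i j) y cf (@coord_continuous R p q i j (f y))). Qed.

Lemma mx_cts p q (f : X -> 'M[R]_(p, q)) :
  (forall i j, cts (fun x => f x i j)) -> cts f.
Proof.
move=> H; rewrite /continuous_at.
apply/(@cvg_mx_entourageP R p q (f @ nbhs y) _ (f y)) => A entA.
apply: filter_forall => i; apply: filter_forall => j.
have := H i j; move/cvg_entourageP => /(_ A entA).
rewrite !near_simpl => HA; apply: (filterS _ HA) => z Az.
by rewrite inE.
Qed.

Lemma cts_add (f g : X -> R) : cts f -> cts g -> cts (fun x => f x + g x).
Proof. by move=> cf cg; apply: cvgD. Qed.

Lemma cts_mul (f g : X -> R) : cts f -> cts g -> cts (fun x => f x * g x).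
Proof. by move=> cf cg; apply: cvgM. Qed.

Lemma cts_inv (f : X -> R) : f y != 0 -> cts f -> cts (fun x => (f x)^-1).
Proof. by move=> f0 cf; apply: cvgV. Qed.

Lemma cts_sum (I : finType) (F : I -> X -> R) :
  (forall i, cts (F i)) -> cts (fun x => \sum_i F i x).
Proof.
move=> H; apply: cvg_big => //; first exact: add_continuous.
by move=> i _; exact: H.
Qed.

Lemma cts_prod (I : finType) (F : I -> X -> R) :
  (forall i, cts (F i)) -> cts (fun x => \prod_i F i x).
Proof.
move=> H; apply: cvg_big => //; first exact: mul_continuous.
by move=> i _; exact: H.
Qed.

Lemma cts_addmx p q (f g : X -> 'M[R]_(p, q)) :
  cts f -> cts g -> cts (fun x => f x + g x).
Proof. by move=> cf cg; apply: cvgD. Qed.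

Lemma cts_oppmx p q (f : X -> 'M[R]_(p, q)) :
  cts f -> cts (fun x => - f x).
Proof. by move=> cf; apply: cvgN. Qed.

Lemma cts_scalemx p q (s : X -> R) (f : X -> 'M[R]_(p, q)) :
  cts s -> cts f -> cts (fun x => s x *: f x).
Proof. by move=> cs cf; apply: cvgZ. Qed.

Lemma cts_mulmx p q r (f : X -> 'M[R]_(p, q)) (g : X -> 'M[R]_(q, r)) :
  cts f -> cts g -> cts (fun x => f x *m g x).
Proof.
move=> cf cg; apply: mx_cts => i j.
apply: (@cts_ext _ _ (fun x => \sum_k f x i k * g x k j)) => [x|].
  by rewrite mxE.
by apply: cts_sum => k; apply: cts_mul; apply: cts_entry.
Qed.

Lemma cts_trmx p q (f : X -> 'M[R]_(p, q)) : cts f -> cts (fun x => (f x)^T).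
Proof.
move=> cf; apply: mx_cts => i j.
apply: (@cts_ext _ _ (fun x => f x j i)) => [x|]; first by rewrite mxE.
exact: cts_entry.
Qed.

Lemma cts_col_mx p1 p2 q (f : X -> 'M[R]_(p1, q)) (g : X -> 'M[R]_(p2, q)) :
  cts f -> cts g -> cts (fun x => col_mx (f x) (g x)).
Proof.
move=> cf cg; apply: mx_cts => i j.
rewrite -(fintype.splitK i); case: (fintype.split i) => k /=.
  apply: (@cts_ext _ _ (fun x => f x k j)) => [x|]; first by rewrite col_mxEu.
  exact: cts_entry.
apply: (@cts_ext _ _ (fun x => g x k j)) => [x|]; first by rewrite col_mxEd.
exact: cts_entry.
Qed.

Lemma cts_row_mx p q1 q2 (f : X -> 'M[R]_(p, q1)) (g : X -> 'M[R]_(p, q2)) :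
  cts f -> cts g -> cts (fun x => row_mx (f x) (g x)).
Proof.
move=> cf cg; apply: mx_cts => i j.
rewrite -(fintype.splitK j); case: (fintype.split j) => k /=.
  apply: (@cts_ext _ _ (fun x => f x i k)) => [x|]; first by rewrite row_mxEl.
  exact: cts_entry.
apply: (@cts_ext _ _ (fun x => g x i k)) => [x|]; first by rewrite row_mxEr.
exact: cts_entry.
Qed.

Lemma cts_block_mx p1 p2 q1 q2 (a : X -> 'M[R]_(p1, q1)) (b : X -> 'M[R]_(p1, q2))
  (c : X -> 'M[R]_(p2, q1)) (d : X -> 'M[R]_(p2, q2)) :
  cts a -> cts b -> cts c -> cts d ->
  cts (fun x => block_mx (a x) (b x) (c x) (d x)).
Proof.
move=> ca cb cc cd.
apply: (@cts_ext _ _ (fun x => col_mx (row_mx (a x) (b x)) (row_mx (c x) (d x)))).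
  by move=> x; rewrite block_mxEv.
by apply: cts_col_mx; apply: cts_row_mx.
Qed.

Lemma cts_usubmx p1 p2 q (f : X -> 'M[R]_(p1 + p2, q)) :
  cts f -> cts (fun x => usubmx (f x)).
Proof.
move=> cf; apply: mx_cts => i j.
apply: (@cts_ext _ _ (fun x => f x (lshift p2 i) j)) => [x|]; first by rewrite mxE.
exact: cts_entry.
Qed.

Lemma cts_dsubmx p1 p2 q (f : X -> 'M[R]_(p1 + p2, q)) :
  cts f -> cts (fun x => dsubmx (f x)).
Proof.
move=> cf; apply: mx_cts => i j.
apply: (@cts_ext _ _ (fun x => f x (rshift p1 i) j)) => [x|]; first by rewrite mxE.
exact: cts_entry.
Qed.

Lemma cts_det p (f : X -> 'M[R]_p) : cts f -> cts (fun x => \det (f x)).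
Proof.
move=> cf; rewrite /determinant.
apply: cts_sum => s; apply: cts_mul; first exact: cts_cst.
by apply: cts_prod => i; apply: cts_entry.
Qed.

Lemma cts_adj p (f : X -> 'M[R]_p) : cts f -> cts (fun x => \adj (f x)).
Proof.
move=> cf; apply: mx_cts => i j.
apply: (@cts_ext _ _ (fun x => (-1) ^+ (j + i) * \det (row' j (col' i (f x))))).
  by move=> x; rewrite mxE.
apply: cts_mul; first exact: cts_cst.
apply: cts_det; apply: mx_cts => a b.
apply: (@cts_ext _ _ (fun x => f x (lift j a) (lift i b))) => [x|].
  by rewrite !mxE.
exact: cts_entry.
Qed.

End Cts.


Ltac norm_inst R := repeat match goal with |- context [@mulmx ?R0 ?a ?b ?c ?x ?y] =>
  lazymatch R0 with reals_Real__to__GRing_PzSemiRing R => fail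
  | _ => change (@mulmx R0 a b c x y) with
           (@mulmx (reals_Real__to__GRing_PzSemiRing R) a b c x y) end end.

Ltac lin := match goal with R : realType |- _ => norm_inst R end;
  repeat match goal with |- context [ @mulmx ?R ?a ?b ?c ?x ?y ] =>
   let t := fresh "t" in set t := (@mulmx R a b c x y); clearbody t;
   let u := fresh "u" in generalize (@mulmx R a b c x y); intro u end;
  apply/matrixP => ? ?; rewrite !mxE; ring.

Section Alg.
Context {R : realType}.

Lemma tr11 (x : 'M[R]_1) : x^T = x.
Proof. by apply/matrixP => i j; rewrite !ord1 mxE. Qed.

Lemma trD p q (u w : 'M[R]_(p, q)) : (u + w)^T = u^T + w^T.
Proof. by apply/matrixP => i j; rewrite !mxE. Qed.

Lemma trN p q (u : 'M[R]_(p, q)) : (- u)^T = - u^T.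
Proof. by apply/matrixP => i j; rewrite !mxE. Qed.

Lemma trB p q (u w : 'M[R]_(p, q)) : (u - w)^T = u^T - w^T.
Proof. by rewrite trD trN. Qed.

Lemma trpair p (u w : 'cV[R]_p) : u^T *m w = w^T *m u.
Proof. by rewrite -[LHS]tr11 trmx_mul trmxK. Qed.

Lemma sq0 p (w : 'cV[R]_p) : (w^T *m w) 0 0 = 0 -> w = 0.
Proof.
rewrite mxE => /eqP; rewrite psumr_eq0 => [/allP H|i _]; last first.
  by rewrite mxE -expr2 sqr_ge0.
apply/matrixP => i j; rewrite ord1 mxE.
have := H i (mem_index_enum i); rewrite mxE -expr2 sqrf_eq0.
by move/eqP.
Qed.

Lemma orth0 p (u : 'cV[R]_p) : (forall g : 'cV[R]_p, g^T *m u = 0) -> u = 0.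
Proof. by move=> H; apply: sq0; rewrite (H u) mxE. Qed.

Lemma orth_range l p (A : 'M[R]_(l, p)) (u : 'cV[R]_p) :
  (forall w : 'cV[R]_p, A *m w = 0 -> w^T *m u = 0) ->
  exists mu : 'cV[R]_l, u = A^T *m mu.
Proof.
move=> H; set K := kermx A^T.
have Ku : K *m u = 0.
  apply/row_matrixP => i; rewrite row_mul row0.
  rewrite -[row i K]trmxK; apply: H.
  by apply/trmx_inj; rewrite trmx_mul trmxK -row_mul mulmx_ker row0 trmx0.
have AK : (A <= kermx K^T)%MS.
  by apply/sub_kermxP; rewrite -[A]trmxK -trmx_mul mulmx_ker trmx0.
have KA : (kermx K^T <= A)%MS.
  rewrite -(mxrank_leqif_sup AK).2 mxrank_ker mxrank_tr mxrank_ker mxrank_tr.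
  by rewrite subKn ?rank_leq_col.
have : (u^T <= A)%MS.
  apply: submx_trans KA; apply/sub_kermxP.
  by rewrite -trmx_mul Ku trmx0.
case/submxP => D uD; exists D^T.
by rewrite -[u]trmxK uD trmx_mul.
Qed.

End Alg.

Ltac norm1 := rewrite ?trmx0 ?trN ?trD ?trB ?trmx_mul ?trmxK
  ?mul0mx ?mulmx0 ?mulNmx ?mulmxN ?mulmxDl ?mulmxDr ?mulmxBl ?mulmxBr ?mulmxA.

Ltac norm := norm1; norm1; norm1.

Ltac trp u w := match goal with R : realType |- _ => norm_inst R end;
  rewrite (trpair u w).

Notation col4 a b c d := (col_mx (col_mx (col_mx a b) c) d).

Section Dirac.
Context {R : realType} (n m l : nat) (A : 'cV[R]_n -> 'M[R]_(l, n))
  (B : 'cV[R]_n -> 'M[R]_(n, m)) (r : 'cV[R]_n).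

Lemma pairE (a b c p q s ah bh ch ph qh sh : 'cV[R]_n) (d t dh th : 'cV[R]_m) :
  (col4 ah bh ch dh)^T *m col4 p q s t + (col4 a b c d)^T *m col4 ph qh sh th =
  ah^T *m p + bh^T *m q + ch^T *m s + dh^T *m t +
  (a^T *m ph + b^T *m qh + c^T *m sh + d^T *m th).
Proof. by rewrite !tr_col_mx !mul_row_col. Qed.

Lemma Dsub : is_subspace (Dmech A B r).
Proof.
split.
  exists 0, 0, 0, 0, 0, 0, 0, 0; rewrite /= !col_mx0.
  do 6 (split; first by rewrite ?mulmx0).
  by exists 0; rewrite !mulmx0 !addr0.
move=> a [p1 p2] [q1 q2].
case=> v1 [F1 [w1 [x1 [G1 [z1 [H1 [y1 [/= E1 [/= E2 [e1 [e2 [Av [ex [mu Smu]]]]]]]]]]]]]].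
case=> v2 [F2 [w2 [x2 [G2 [z2 [H2 [y2 [/= E1' [/= E2' [e1' [e2' [Av' [ex' [mu' Smu']]]]]]]]]]]]]].
subst.
exists (a *: w1 + w2), (a *: F1 + F2), (a *: w1 + w2), (a *: ((B r)^T *m w1) + (B r)^T *m w2).
exists (a *: G1 + G2), (a *: w1 + w2), (a *: H1 + H2), (a *: y1 + y2).
rewrite /= !scale_col_mx !add_col_mx.
do 4 (split; first by []).
split; first by rewrite mulmxDr -scalemxAr Av Av' scaler0 addr0.
split; first by rewrite mulmxDr -scalemxAr.
exists (a *: mu + mu').
transitivity (a *: (F1 + G1 + H1 + B r *m y1 + (A r)^T *m mu) +
              (F2 + G2 + H2 + B r *m y2 + (A r)^T *m mu')).
  by norm; rewrite -!scalemxAr; lin.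
by rewrite Smu Smu' scaler0 addr0.
Qed.

Lemma Dpair f e fh eh : Dmech A B r (f, e) -> Dmech A B r (fh, eh) ->
  fh^T *m e + f^T *m eh = 0.
Proof.
case=> v1 [F1 [w1 [x1 [G1 [z1 [H1 [y1 [/= E1 [/= E2 [e1 [e2 [Av [ex [mu Smu]]]]]]]]]]]]]].
case=> v2 [F2 [w2 [x2 [G2 [z2 [H2 [y2 [/= E1' [/= E2' [e1' [e2' [Av' [ex' [mu' Smu']]]]]]]]]]]]]].
subst; rewrite pairE.
transitivity (w2^T *m (F1 + G1 + H1 + B r *m y1 + (A r)^T *m mu) +
  w1^T *m (F2 + G2 + H2 + B r *m y2 + (A r)^T *m mu') -
  ((A r *m w2)^T *m mu + (A r *m w1)^T *m mu')).
  rewrite (trpair F2 w1) (trpair F1 w2); norm; lin.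
by rewrite Smu Smu' Av Av' !trmx0 !mul0mx !mulmx0 !addr0 subr0.
Qed.

Lemma Dmem (v FLf FLe FR : 'cV[R]_n) (Fext : 'cV[R]_m) (mu : 'cV[R]_l) :
  A r *m v = 0 -> FLf + FLe + FR + B r *m Fext + (A r)^T *m mu = 0 ->
  Dmech A B r (col4 v FLf v ((B r)^T *m v), col4 FLe v FR Fext).
Proof.
move=> Av S; exists v, FLf, v, ((B r)^T *m v), FLe, v, FR, Fext.
by do 6 (split => //); exists mu.
Qed.

Lemma Dclosed f e :
  (forall fh eh, Dmech A B r (fh, eh) -> fh^T *m e + f^T *m eh = 0) ->
  Dmech A B r (f, e).
Proof.
move=> H.
have [a [b [c [d Ef]]]] : exists a b c d, f = col4 a b c d.
  exists (usubmx (usubmx (usubmx f))), (dsubmx (usubmx (usubmx f))).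
  by exists (dsubmx (usubmx f)), (dsubmx f); rewrite !vsubmxK.
have [p [q [s [t Ee]]]] : exists p q s t, e = col4 p q s t.
  exists (usubmx (usubmx (usubmx e))), (dsubmx (usubmx (usubmx e))).
  by exists (dsubmx (usubmx e)), (dsubmx e); rewrite !vsubmxK.
rewrite Ef Ee in H.
have qa : q - a = 0.
  apply: orth0 => g.
  have := H _ _ (@Dmem 0 g (- g) 0 0 0 (mulmx0 _ _) _).
  rewrite pairE => <-; first by norm; trp a g; lin.
  by norm; lin.
have qc : q - c = 0.
  apply: orth0 => g.
  have := H _ _ (@Dmem 0 g 0 (- g) 0 0 (mulmx0 _ _) _).
  rewrite pairE => <-; first by norm; trp c g; lin.
  by norm; lin.
have dq : d - (B r)^T *m q = 0.
  apply: orth0 => g.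
  have := H _ _ (@Dmem 0 (- (B r *m g)) 0 0 g 0 (mulmx0 _ _) _).
  rewrite pairE => <-; first by norm; trp d g; lin.
  by norm; lin.
have Aq : A r *m q = 0.
  apply: orth0 => g.
  have := H _ _ (@Dmem 0 ((A r)^T *m g) 0 0 0 (- g) (mulmx0 _ _) _).
  rewrite pairE => <-; first by norm; lin.
  by norm; lin.
have [mu0 Emu] : exists mu0 : 'cV[R]_l, b + p + s + B r *m t = (A r)^T *m mu0.
  apply: orth_range => w Aw.
  have := H _ _ (@Dmem w 0 0 0 0 0 Aw _).
  rewrite pairE => <-; first by norm; trp b w; lin.
  by norm; lin.
exists a, b, c, d, p, q, s, t.
split; first by []. split; first by [].
split; first by apply/eqP; rewrite eq_sym -subr_eq0 qa.
split; first by apply/eqP; rewrite -subr_eq0 qc.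
split; first by [].
split; first by apply/eqP; rewrite -subr_eq0 dq.
by exists (- mu0); rewrite Emu mulmxN subrr.
Qed.

Lemma Ddirac : Dirac_structure (Dmech A B r).
Proof.
split; first exact: Dsub.
move=> f e; split; first by move=> fe fh eh; apply: Dpair.
exact: Dclosed.
Qed.

End Dirac.


Section Constr.
Context {R : realType} (n m r : nat).
Local Notation N := (n + n + n + m)%N.

Definition Mmat (Ap : 'M[R]_(r, n)) (Bm : 'M[R]_(n, m)) : 'M[R]_(n + r) :=
  block_mx (3%:M + Bm *m Bm^T) Ap^T Ap 0.
Definition E1 : 'M[R]_(n, N) := usubmx (usubmx (usubmx 1%:M)).
Definition E2 : 'M[R]_(n, N) := dsubmx (usubmx (usubmx 1%:M)).
Definition E3 : 'M[R]_(n, N) := dsubmx (usubmx 1%:M).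
Definition E4 : 'M[R]_(m, N) := dsubmx 1%:M.
Definition Cm (Bm : 'M[R]_(n, m)) : 'M[R]_(n, N) := E2 - E1 - E3 - Bm *m E4.
Definition Sm Ap Bm : 'M[R]_(n + r, N) :=
  ((\det (Mmat Ap Bm))^-1 *: \adj (Mmat Ap Bm)) *m col_mx (- Cm Bm) 0.
Definition Vm Ap Bm : 'M[R]_(n, N) := usubmx (Sm Ap Bm).
Definition P1 Ap Bm : 'M[R]_N :=
  col4 (Vm Ap Bm) (Vm Ap Bm + E2) (Vm Ap Bm) (Bm^T *m Vm Ap Bm).
Definition P2 Ap Bm : 'M[R]_N :=
  col4 (Vm Ap Bm - E1) (Vm Ap Bm) (Vm Ap Bm - E3) (Bm^T *m Vm Ap Bm - E4).

Lemma P12 Ap Bm : P1 Ap Bm - P2 Ap Bm = 1%:M.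
Proof.
rewrite /P1 /P2 !opp_col_mx !add_col_mx.
have h : forall p (X Y : 'M[R]_(p, N)), X - (X - Y) = Y.
  by move=> p X Y; rewrite opprB addrC subrK.
by rewrite !h [_ + E2]addrC addrK /E1 /E2 /E3 /E4 !vsubmxK.
Qed.


Lemma Sm_eqs Ap Bm : \det (Mmat Ap Bm) != 0 ->
  (3%:M + Bm *m Bm^T) *m Vm Ap Bm + Ap^T *m dsubmx (Sm Ap Bm) = - Cm Bm /\
  Ap *m Vm Ap Bm = 0.
Proof.
move=> d0.
have : Mmat Ap Bm *m Sm Ap Bm = col_mx (- Cm Bm) 0.
  by rewrite /Sm mulmxA -scalemxAr mul_mx_adj scale_scalar_mx mulVf // mul1mx.
rewrite -[X in Mmat _ _ *m X]vsubmxK /Mmat mul_block_col mul0mx addr0.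
by case/eq_col_mx => h1 h2; split.
Qed.

Lemma T_in l (A : 'cV[R]_n -> 'M[R]_(l, n)) (B : 'cV[R]_n -> 'M[R]_(n, m))
    y (L : 'M[R]_(r, l)) z :
  \det (Mmat (L *m A y) (B y)) != 0 -> (A y <= L *m A y)%MS ->
  Dmech A B y (P1 (L *m A y) (B y) *m z, P2 (L *m A y) (B y) *m z).
Proof.
move=> d0 sub; have [h1 h2] := Sm_eqs d0.
case/submxP: sub => X EX.
set V := Vm _ _ in h1 h2 *; set Mu := dsubmx _ in h1.
exists (V *m z), ((V + E2) *m z), (V *m z), ((B y)^T *m (V *m z)).
exists ((V - E1) *m z), (V *m z), ((V - E3) *m z), (((B y)^T *m V - E4) *m z).
split; first by rewrite /P1 !mul_col_mx mulmxA.
split; first by rewrite /P2 !mul_col_mx.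
split; first by []. split; first by [].
split; first by rewrite mulmxA EX -(mulmxA X) h2 mulmx0 mul0mx.
split; first by [].
exists (L^T *m (Mu *m z)).
transitivity ((((3%:M + B y *m (B y)^T) *m V + (L *m A y)^T *m Mu) + Cm (B y)) *m z).
  rewrite /Cm; norm; rewrite ?mul_scalar_mx -?scalemxAl; norm; lin.
by rewrite h1 addNr mul0mx.
Qed.

Lemma row_free_by p q (M : 'M[R]_(p, q)) :
  (forall u : 'rV[R]_p, u *m M = 0 -> u = 0) -> row_free M.
Proof.
move=> H; rewrite -kermx_eq0; apply/eqP/row_matrixP => i; rewrite row0.
by apply: H; rewrite -row_mul mulmx_ker row0.
Qed.

Lemma rsq_ge0 p (w : 'rV[R]_p) : 0 <= (w *m w^T) 0 0.
Proof. by rewrite mxE sumr_ge0 // => i _; rewrite mxE -expr2 sqr_ge0. Qed.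

Lemma rsq0 p (w : 'rV[R]_p) : (w *m w^T) 0 0 = 0 -> w = 0.
Proof. by move=> h; apply: trmx_inj; rewrite trmx0; apply: sq0; rewrite trmxK. Qed.

Lemma addmxE' p q (X Y : 'M[R]_(p, q)) i j : (X + Y) i j = X i j + Y i j.
Proof. by rewrite mxE. Qed.
Lemma scalemxE' p q (a : R) (X : 'M[R]_(p, q)) i j : (a *: X) i j = a * X i j.
Proof. by rewrite mxE. Qed.

Lemma det_neq0 Ap Bm : row_free Ap -> \det (Mmat Ap Bm) != 0.
Proof.
move=> fr; rewrite -unitfE -unitmxE -row_free_unit; apply: row_free_by => u.
rewrite -[u]hsubmxK /Mmat mul_row_block mulmx0 addr0 -row_mx0.
case/eq_row_mx => h1 h2.
move: h1 h2; set a := lsubmx u; set b := rsubmx u; clearbody a b => h1 h2.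
have Aa : Ap *m a^T = 0 by apply/trmx_inj; rewrite trmx_mul trmxK h2 trmx0.
have : (a *m (3%:M + Bm *m Bm^T) + b *m Ap) *m a^T = 0 by rewrite h1 mul0mx.
have -> : (a *m (3%:M + Bm *m Bm^T) + b *m Ap) *m a^T =
   3 *: (a *m a^T) + (a *m Bm) *m (a *m Bm)^T + b *m (Ap *m a^T).
  by rewrite mulmxDr mul_mx_scalar; norm; rewrite -?scalemxAl; norm; lin.
rewrite Aa mulmx0 addr0 => /matrixP /(_ 0 0).
rewrite addmxE' scalemxE' [RHS]mxE => e.
have a0 : a = 0.
  apply: rsq0; have := rsq_ge0 a; have := rsq_ge0 (a *m Bm); lra.
move: h1; rewrite a0 mul0mx add0r => hb.
have b0 : b = 0 by apply: (row_free_inj fr); rewrite hb mul0mx.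
by rewrite b0.
Qed.

Lemma det_rowfree Ap Bm : \det (Mmat Ap Bm) != 0 -> row_free Ap.
Proof.
move=> d0; apply: row_free_by => b hb.
have U : Mmat Ap Bm \in unitmx by rewrite unitmxE unitfE.
have : row_mx 0 b *m Mmat Ap Bm = 0.
  by rewrite /Mmat mul_row_block !mul0mx !mulmx0 hb !addr0 row_mx0.
move/(congr1 (mulmx^~ (invmx (Mmat Ap Bm)))); rewrite /= mulmxK // mul0mx.
by rewrite -row_mx0 => /eq_row_mx [_].
Qed.

Section CtsP.
Context {X : topologicalType} (Ap : X -> 'M[R]_(r, n)) (Bm : X -> 'M[R]_(n, m)) (y : X).
Hypotheses (cA : {for y, continuous Ap}) (cB : {for y, continuous Bm})
  (d0 : \det (Mmat (Ap y) (Bm y)) != 0).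

Lemma cts_M : {for y, continuous (fun x => Mmat (Ap x) (Bm x))}.
Proof.
rewrite /Mmat; apply: cts_block_mx.
- apply: cts_addmx; first exact: cts_cst.
  apply: cts_mulmx; first exact cB.
  apply: cts_trmx; exact cB.
- apply: cts_trmx; exact cA.
- exact cA.
- exact: cts_cst.
Qed.

Lemma cts_Vm : {for y, continuous (fun x => Vm (Ap x) (Bm x))}.
Proof.
have cM := cts_M.
rewrite /Vm /Sm; apply: cts_usubmx; apply: cts_mulmx.
  apply: cts_scalemx.
    apply: cts_inv; first exact d0.
    apply: cts_det; exact cM.
  apply: cts_adj; exact cM.
apply: cts_col_mx; last exact: cts_cst.
apply: cts_oppmx; rewrite /Cm; apply: cts_addmx.
  apply: cts_addmx.
    apply: cts_addmx; first exact: cts_cst.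
    apply: cts_oppmx; exact: cts_cst.
  apply: cts_oppmx; exact: cts_cst.
apply: cts_oppmx; apply: cts_mulmx; first exact cB.
exact: cts_cst.
Qed.

Lemma cts_P1 : {for y, continuous (fun x => P1 (Ap x) (Bm x))}.
Proof.
have cV := cts_Vm.
rewrite /P1; apply: cts_col_mx.
  apply: cts_col_mx; last exact cV.
  apply: cts_col_mx; first exact cV.
  apply: cts_addmx; first exact cV.
  exact: cts_cst.
apply: cts_mulmx; last exact cV.
apply: cts_trmx; exact cB.
Qed.

Lemma cts_P2 : {for y, continuous (fun x => P2 (Ap x) (Bm x))}.
Proof.
have cV := cts_Vm.
rewrite /P2; apply: cts_col_mx.
  apply: cts_col_mx.
    apply: cts_col_mx.
      apply: cts_addmx; first exact cV.
      apply: cts_oppmx; exact: cts_cst.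
    exact cV.
  apply: cts_addmx; first exact cV.
  apply: cts_oppmx; exact: cts_cst.
apply: cts_addmx.
  apply: cts_mulmx; last exact cV.
  apply: cts_trmx; exact cB.
apply: cts_oppmx; exact: cts_cst.
Qed.

End CtsP.

End Constr.

Lemma diag0 {R : realType} n m l (A : 'cV[R]_n -> 'M[R]_(l, n))
  (B : 'cV[R]_n -> 'M[R]_(n, m)) y (u : 'cV[R]_(n + n + n + m)) :
  Dmech A B y (u, u) -> u = 0.
Proof.
move=> D; have := Dpair D D.
move/matrixP/(_ 0 0); rewrite addmxE' [RHS]mxE => e.
by apply: sq0; lra.
Qed.

Unset Implicit Arguments.

Theorem proposition1 (R : realType) (n m l : nat) (Upos : set 'cV[R]_n)
    (A : 'cV[R]_n -> 'M[R]_(l, n)) (B : 'cV[R]_n -> 'M[R]_(n, m)) :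
  open Upos ->
  {within Upos, continuous A} ->
  {within Upos, continuous B} ->
  (forall r s, Upos r -> Upos s -> \rank (A r) = \rank (A s)) ->
  modulated_Dirac Upos (Dmech A B).
Proof.
move=> oU cA cB rk x Upx.
split; first exact: Ddirac.
have cA' : {in Upos, continuous A} by rewrite -continuous_open_subspace.
have cB' : {in Upos, continuous B} by rewrite -continuous_open_subspace.
pose r := \rank (A x).
pose L : 'M[R]_(r, l) := row_base (A x) *m pinvmx (A x).
have LAx : L *m A x = row_base (A x) by rewrite mulmxKpV // eq_row_base.
pose Ap y := L *m A y.
pose Ux := [set y | Upos y /\ \det (Mmat (Ap y) (B y)) != 0].
have ctsAp : forall y, Upos y -> {for y, continuous Ap}.
  move=> y Uy; apply: cts_mulmx; first exact: cts_cst.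
  by apply: cA'; rewrite inE.
have ctsB : forall y, Upos y -> {for y, continuous B}.
  by move=> y Uy; apply: cB'; rewrite inE.
have sub : forall y, Ux y -> (A y <= Ap y)%MS.
  move=> y [Uy dy]; have /eqP fr := det_rowfree dy.
  rewrite -(mxrank_leqif_sup (submxMl L (A y))).2.
  by rewrite /Ap fr (rk y x Uy Upx).
exists Ux, (fun y z => (P1 (Ap y) (B y) *m z, P2 (Ap y) (B y) *m z)).
split.
  rewrite openE => y [Uy dy].
  have nU : nbhs y Upos by move: oU; rewrite openE; apply.
  have cd : {for y, continuous (fun w => \det (Mmat (Ap w) (B w)))}.
    by apply: cts_det; apply: cts_M; [apply: ctsAp | apply: ctsB].
  have nd : \forall w \near y, \det (Mmat (Ap w) (B w)) != 0 := cvgr_neq0 _ cd dy.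
  suff : nbhs y Ux by [].
  near=> w; split; near: w; [exact: nU | exact: nd].
split.
  split => //; rewrite /Ap LAx; apply: det_neq0; exact: row_base_free.
split; first by move=> y [].
split.
  move=> y Uy; have sy := sub y Uy; case: Uy => Uy dy.
  split.
    by move=> a u v; rewrite !mulmxDr -!scalemxAr.
  split.
    move=> z1 z2 E.
    have e1 := congr1 fst E; have e2 := congr1 snd E; move: e1 e2 => /= e1 e2.
    rewrite -[z1]mul1mx -[z2]mul1mx -(P12 (Ap y) (B y)) !mulmxBl.
    by rewrite e1 e2.
  case=> p1 p2; split; last by case=> z <-; apply: T_in.
  move=> Dp; exists (p1 - p2).
  have Dq := @T_in R n m r l A B y L (p1 - p2) dy sy.
  set z := p1 - p2.
  have [w1 Ew1] : exists w1, w1 = -1 *: p1 + P1 (Ap y) (B y) *m z by eexists.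
  have [w2 Ew2] : exists w2, w2 = -1 *: p2 + P2 (Ap y) (B y) *m z by eexists.
  have Dw : Dmech A B y (w1, w2).
    by rewrite Ew1 Ew2; exact: ((Dsub A B y).2 (-1) _ _ Dp Dq).
  have Ew : w1 = w2.
    apply/eqP; rewrite -subr_eq0.
    have -> : w1 - w2 = (P1 (Ap y) (B y) - P2 (Ap y) (B y)) *m z - z.
      by rewrite Ew1 Ew2 /z mulmxBl !scaleN1r; lin.
    by rewrite P12 mul1mx subrr.
  move: Dw; rewrite -Ew => /diag0 w0.
  have e1 : P1 (Ap y) (B y) *m z = p1.
    by apply/eqP; rewrite -subr_eq0 addrC -scaleN1r -Ew1 w0.
  have e2 : P2 (Ap y) (B y) *m z = p2.
    by apply/eqP; rewrite -subr_eq0 addrC -scaleN1r -Ew2 -Ew w0.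
  by rewrite e1 e2.
move=> z; apply: continuous_in_subspaceT => y; rewrite inE => -[Uy dy].
have c1 : {for y, continuous (fun y0 => P1 (Ap y0) (B y0) *m z)}.
  by apply: cts_mulmx; [apply: cts_P1; [apply: ctsAp | apply: ctsB | ] | apply: cts_cst].
have c2 : {for y, continuous (fun y0 => P2 (Ap y0) (B y0) *m z)}.
  by apply: cts_mulmx; [apply: cts_P2; [apply: ctsAp | apply: ctsB | ] | apply: cts_cst].
exact: (cvg_pair c1 c2).
Unshelve. all: by end_near. Qed.
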